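(* Let $(\Theta,\mathbf{Q},\leq)$ be a $\Theta$-projective system of size $t$ in a triangulated category $\mathcal{T}$, with triangles $K(i)\to Q(i)\xrightarrow{\beta_i}\Theta(i)\to K(i)[1]$. Then: (a) $\mathrm{Hom}_\mathcal{T}(K(j),\Theta(i))=0=\mathrm{Hom}_\mathcal{T}(\Theta(j),\Theta(i)[1])$ for all $j\ge i$; (b) $\mathrm{Hom}_\mathcal{T}(\beta_j,\Theta(i)):\mathrm{Hom}_\mathcal{T}(\Theta(j),\Theta(i))\to\mathrm{Hom}_\mathcal{T}(Q(j),\Theta(i))$ is an isomorphism of abelian groups for all $j\ge i$; (c) if $\mathrm{Hom}_\mathcal{T}(K(j)[2],\Theta(i))=0$ for all $i,j\in[1,t]$, then $\mathrm{Hom}_\mathcal{T}(\Theta(i),\Theta(j)[-1])=0$ for all $i,j$.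
   Context: $\mathfrak{F}(\mathcal{X})$: objects $M$ admitting distinguished triangles $M_{k-1}\to M_k\to X_k\to M_{k-1}[1]$ ($k=0,\dots,n$), $M_{-1}=0=X_0$, $M_n=M$, $X_k\in\mathcal{X}$ for $k\ge1$. A $\Theta$-projective system of size $t$: $\le$ a linear order on $[1,t]$; $\Theta(1),\dots,\Theta(t)$ non-zero with $\mathrm{Hom}(\Theta(j),\Theta(i))=0$ for $j>i$; $Q(1),\dots,Q(t)$ indecomposable with $Q=\bigoplus Q(i)$ satisfying $\mathrm{Hom}(Q,\Theta(j)[1])=0=\mathrm{Hom}(Q,\Theta(j)[-1])$ for all $j$; for each $i$ a distinguished triangle $K(i)\to Q(i)\xrightarrow{\beta_i}\Theta(i)\to K(i)[1]$ with $K(i)\in\mathfrak{F}(\{\Theta(j):j>i\})$ and $\mathrm{Hom}(K(i)[1],\Theta(i))=0$. Inequalities $j\ge i$, $j>i$ refer to $\le$. *)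

(* Defs.v *)
From HB Require Import structures.
From mathcomp Require Import all_boot all_order all_algebra.
Set Implicit Arguments. Unset Strict Implicit. Unset Printing Implicit Defensive.
Import GRing.Theory.
Local Open Scope ring_scope.

Record TriangCat := {
  Ob : Type;
  THom : Ob -> Ob -> zmodType;
  tcomp : forall X Y Z : Ob, THom Y Z -> THom X Y -> THom X Z;
  idm : forall X : Ob, THom X X;
  compA : forall X Y Z W (h : THom Z W) (g : THom Y Z) (f : THom X Y),
      tcomp h (tcomp g f) = tcomp (tcomp h g) f;
  comp1m : forall X Y (f : THom X Y), tcomp (idm Y) f = f;
  compm1 : forall X Y (f : THom X Y), tcomp f (idm X) = f;
  compDl : forall X Y Z (g1 g2 : THom Y Z) (f : THom X Y),
      tcomp (g1 + g2) f = tcomp g1 f + tcomp g2 f;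
  compDr : forall X Y Z (g : THom Y Z) (f1 f2 : THom X Y),
      tcomp g (f1 + f2) = tcomp g f1 + tcomp g f2;
  zero_obj_ex : exists Z : Ob, idm Z = 0;
  biprod_ex : forall A B : Ob, exists (S : Ob) (i1 : THom A S) (i2 : THom B S)
      (p1 : THom S A) (p2 : THom S B),
      [/\ tcomp p1 i1 = idm A, tcomp p2 i2 = idm B, tcomp p1 i2 = 0,
          tcomp p2 i1 = 0 & tcomp i1 p1 + tcomp i2 p2 = idm S];
  sh : Ob -> Ob;
  shm : forall X Y, THom X Y -> THom (sh X) (sh Y);
  shm_id : forall X, shm (idm X) = idm (sh X);
  shm_comp : forall X Y Z (g : THom Y Z) (f : THom X Y),
      shm (tcomp g f) = tcomp (shm g) (shm f);
  shm_add : forall X Y (f g : THom X Y), shm (f + g) = shm f + shm g;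
  ush : Ob -> Ob;
  ushm : forall X Y, THom X Y -> THom (ush X) (ush Y);
  ushm_id : forall X, ushm (idm X) = idm (ush X);
  ushm_comp : forall X Y Z (g : THom Y Z) (f : THom X Y),
      ushm (tcomp g f) = tcomp (ushm g) (ushm f);
  ushm_add : forall X Y (f g : THom X Y), ushm (f + g) = ushm f + ushm g;
  eta : forall X, THom X (sh (ush X));
  eta_inv : forall X, THom (sh (ush X)) X;
  eta_iso1 : forall X, tcomp (eta_inv X) (eta X) = idm X;
  eta_iso2 : forall X, tcomp (eta X) (eta_inv X) = idm (sh (ush X));
  eta_nat : forall X Y (f : THom X Y),
      tcomp (eta Y) f = tcomp (shm (ushm f)) (eta X);
  eps : forall X, THom (ush (sh X)) X;
  eps_inv : forall X, THom X (ush (sh X));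
  eps_iso1 : forall X, tcomp (eps_inv X) (eps X) = idm (ush (sh X));
  eps_iso2 : forall X, tcomp (eps X) (eps_inv X) = idm X;
  eps_nat : forall X Y (f : THom X Y),
      tcomp f (eps X) = tcomp (eps Y) (ushm (shm f));
  tdist : forall X Y Z : Ob, THom X Y -> THom Y Z -> THom Z (sh X) -> Prop;
  TR1_iso : forall X Y Z X' Y' Z' (f : THom X Y) (g : THom Y Z) (h : THom Z (sh X))
      (f' : THom X' Y') (g' : THom Y' Z') (h' : THom Z' (sh X'))
      (a : THom X X') (a' : THom X' X) (b : THom Y Y') (b' : THom Y' Y)
      (c : THom Z Z') (c' : THom Z' Z),
      tcomp a' a = idm X -> tcomp a a' = idm X' ->
      tcomp b' b = idm Y -> tcomp b b' = idm Y' ->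
      tcomp c' c = idm Z -> tcomp c c' = idm Z' ->
      tcomp f' a = tcomp b f -> tcomp g' b = tcomp c g -> tcomp h' c = tcomp (shm a) h ->
      tdist f g h -> tdist f' g' h';
  TR1_id : forall X Z, idm Z = 0 -> tdist (idm X) (0 : THom X Z) (0 : THom Z (sh X));
  TR1_cone : forall X Y (f : THom X Y), exists Z (g : THom Y Z) (h : THom Z (sh X)),
      tdist f g h;
  TR2 : forall X Y Z (f : THom X Y) (g : THom Y Z) (h : THom Z (sh X)),
      tdist f g h <-> tdist g h (- shm f);
  TR3 : forall X Y Z X' Y' Z' (f : THom X Y) (g : THom Y Z) (h : THom Z (sh X))
      (f' : THom X' Y') (g' : THom Y' Z') (h' : THom Z' (sh X'))
      (a : THom X X') (b : THom Y Y'),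
      tdist f g h -> tdist f' g' h' -> tcomp f' a = tcomp b f ->
      exists c : THom Z Z', tcomp g' b = tcomp c g /\ tcomp h' c = tcomp (shm a) h;
  TR4 : forall X Y Z Z' X' Y' (u : THom X Y) (v : THom Y Z)
      (j : THom Y Z') (k : THom Z' (sh X))
      (l : THom Z X') (i : THom X' (sh Y))
      (m : THom Z Y') (n : THom Y' (sh X)),
      tdist u j k -> tdist v l i -> tdist (tcomp v u) m n ->
      exists (f : THom Z' Y') (g : THom Y' X'),
        [/\ tdist f g (tcomp (shm j) i), tcomp m v = tcomp f j, k = tcomp n f,
            l = tcomp g m & tcomp i g = tcomp (shm u) n]
}.

Arguments tcomp {_ X Y Z}.
Arguments idm {_}.
Arguments sh {_}.
Arguments ush {_}.
Arguments shm {_ X Y}.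
Arguments tdist {_ X Y Z}.

Section Notions.
Variable T : TriangCat.

Definition is_zero (X : Ob T) : Prop := idm X = 0.

Definition hom_zero (X Y : Ob T) : Prop := forall f : THom X Y, f = 0.

Definition is_biprod2 (A B S : Ob T) : Prop :=
  exists (i1 : THom A S) (i2 : THom B S) (p1 : THom S A) (p2 : THom S B),
      [/\ tcomp p1 i1 = idm A, tcomp p2 i2 = idm B, tcomp p1 i2 = 0,
          tcomp p2 i1 = 0 & tcomp i1 p1 + tcomp i2 p2 = idm S].

Definition indecomposable (X : Ob T) : Prop :=
  ~ is_zero X /\ forall A B, is_biprod2 A B X -> is_zero A \/ is_zero B.

Definition is_biprod (t : nat) (F : 'I_t -> Ob T) (Q : Ob T) : Prop :=
  exists (inj : forall i, THom (F i) Q) (pr : forall i, THom Q (F i)),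
    (forall i, tcomp (pr i) (inj i) = idm (F i)) /\
    (forall i j, i != j -> tcomp (pr i) (inj j) = 0) /\
    (\sum_(i < t) tcomp (inj i) (pr i) = idm Q).

Inductive filt (P : Ob T -> Prop) : nat -> Ob T -> Prop :=
| filt0 (Mm1 M X0 : Ob T) (f : THom Mm1 M) (g : THom M X0) (h : THom X0 (sh Mm1)) :
    is_zero Mm1 -> is_zero X0 -> tdist f g h -> filt P 0 M
| filtS k (M' M X : Ob T) (f : THom M' M) (g : THom M X) (h : THom X (sh M')) :
    filt P k M' -> P X -> tdist f g h -> filt P k.+1 M.

Definition inF (P : Ob T -> Prop) (M : Ob T) : Prop := exists n, filt P n M.

Definition linear_order (t : nat) (le : rel 'I_t) : Prop :=
  [/\ reflexive le, antisymmetric le, transitive le & total le].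

Definition ltl (t : nat) (le : rel 'I_t) (i j : 'I_t) : bool := le i j && (i != j).

(* Theta-projective system of size t; indices [1,t] represented by 'I_t *)
Definition theta_proj_system (t : nat) (le : rel 'I_t) (Theta Q K : 'I_t -> Ob T)
    (alpha : forall i, THom (K i) (Q i)) (beta : forall i, THom (Q i) (Theta i))
    (gamma : forall i, THom (Theta i) (sh (K i))) : Prop :=
  linear_order le /\
  (forall i, ~ is_zero (Theta i)) /\
  (forall i j, ltl le i j -> hom_zero (Theta j) (Theta i)) /\
  (forall i, indecomposable (Q i)) /\
  (exists Qs, is_biprod Q Qs /\
     forall j, hom_zero Qs (sh (Theta j)) /\ hom_zero Qs (ush (Theta j))) /\
  (forall i, tdist (alpha i) (beta i) (gamma i)) /\
  (forall i, inF (fun X => exists j, ltl le i j /\ X = Theta j) (K i)) /\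
  (forall i, hom_zero (sh (K i)) (Theta i)).

End Notions.
Arguments theta_proj_system {T t} le Theta Q K alpha beta gamma.

(* Main.v *)
Require Import Defs.
From mathcomp Require Import all_boot all_order all_algebra.
Import GRing.Theory.
Local Open Scope ring_scope.

Section Aux.
Variable T : TriangCat.

Lemma comp0l (X Y Z : Ob T) (f : THom X Y) : tcomp (0 : THom Y Z) f = 0.
Proof.
apply: (addrI (tcomp (0 : THom Y Z) f)).
by rewrite addr0 -compDl addr0.
Qed.

Lemma comp0r (X Y Z : Ob T) (g : THom Y Z) : tcomp g (0 : THom X Y) = 0.
Proof.
apply: (addrI (tcomp g (0 : THom X Y))).
by rewrite addr0 -compDr addr0.
Qed.

Lemma compNl (X Y Z : Ob T) (g : THom Y Z) (f : THom X Y) :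
  tcomp (- g) f = - tcomp g f.
Proof. by apply/eqP; rewrite -addr_eq0 -compDl addNr comp0l. Qed.

Lemma shm0 (X Y : Ob T) : shm (0 : THom X Y) = 0.
Proof.
apply: (addrI (shm (0 : THom X Y))).
by rewrite addr0 -shm_add addr0.
Qed.

Lemma ushm0 (X Y : Ob T) : ushm (0 : THom X Y) = 0.
Proof.
apply: (addrI (ushm (0 : THom X Y))).
by rewrite addr0 -ushm_add addr0.
Qed.

Lemma zero_to (A Z : Ob T) (f : THom A Z) : is_zero Z -> f = 0.
Proof. by move=> HZ; rewrite -(comp1m f) HZ comp0l. Qed.

Lemma zero_from (A Z : Ob T) (f : THom Z A) : is_zero Z -> f = 0.
Proof. by move=> HZ; rewrite -(compm1 f) HZ comp0r. Qed.

Lemma exact_mid (X Y Z W : Ob T) (f : THom X Y) (g : THom Y Z) (h : THom Z (sh X))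
  (phi : THom Y W) : tdist f g h -> tcomp phi f = 0 ->
  exists chi : THom Z W, phi = tcomp chi g.
Proof.
move=> Hd Hphi.
have [Z0 HZ0] := zero_obj_ex T.
have Hid := TR1_id (ush W) HZ0.
move/TR2: Hid => Hid. move/TR2: Hid => Hid.
have Hc : tcomp (0 : THom Z0 (sh (ush W))) (0 : THom X Z0)
          = tcomp (tcomp (eta W) phi) f.
  by rewrite comp0l -Defs.compA Hphi comp0r.
have [c [Hc1 _]] := TR3 Hd Hid Hc.
exists (tcomp (eta_inv W) (- c)).
rewrite -Defs.compA compNl -Hc1 compNl shm_id comp1m opprK Defs.compA eta_iso1.
by rewrite comp1m.
Qed.

Lemma exact_third (X Y Z W : Ob T) (f : THom X Y) (g : THom Y Z) (h : THom Z (sh X))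
  (psi : THom Z W) : tdist f g h -> tcomp psi g = 0 ->
  exists chi : THom (sh X) W, psi = tcomp chi h.
Proof. by move=> /TR2 Hd; apply: exact_mid Hd. Qed.

Lemma shift_zero1 (A B : Ob T) : hom_zero A B -> hom_zero (sh A) (sh B).
Proof.
move=> H chi.
have H1 : tcomp (eps B) (tcomp (ushm chi) (eps_inv A)) = 0 by apply: H.
have H2 : ushm chi = 0.
  have -> : ushm chi = tcomp (eps_inv B) (tcomp (tcomp (eps B) (tcomp (ushm chi) (eps_inv A))) (eps A)).
    by rewrite -!Defs.compA eps_iso1 compm1 Defs.compA eps_iso1 comp1m.
  by rewrite H1 comp0l comp0r.
have H3 := eta_nat chi.
rewrite H2 shm0 comp0l in H3.
by rewrite -(comp1m chi) -eta_iso1 -Defs.compA H3 comp0r.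
Qed.

Lemma shift_zero2 (A B : Ob T) : hom_zero (sh (sh A)) B -> hom_zero (sh A) (ush B).
Proof.
move=> H chi.
have H1 : tcomp (eta_inv B) (shm chi) = 0 by apply: H.
have H2 : shm chi = 0 by rewrite -(comp1m (shm chi)) -eta_iso2 -Defs.compA H1 comp0r.
have H3 := eps_nat chi.
rewrite H2 ushm0 comp0r in H3.
by rewrite -(compm1 chi) -eps_iso2 Defs.compA H3 comp0l.
Qed.

Lemma filt_zero (P : Ob T -> Prop) n M W :
  filt P n M -> (forall X, P X -> hom_zero X W) -> hom_zero M W.
Proof.
move=> Hf HP; elim: Hf => [Mm1 M0 X0 f g h HM HX Hd | k M' M0 X f g h _ IH HPX Hd] phi.
- have [chi ->] := exact_mid _ _ _ _ _ _ _ phi Hd (zero_from W Mm1 (tcomp phi f) HM).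
  by rewrite (zero_to _ _ g HX) comp0r.
- have [chi ->] := exact_mid _ _ _ _ _ _ _ phi Hd (IH (tcomp phi f)).
  by rewrite (HP _ HPX chi) comp0l.
Qed.

End Aux.

Theorem proposition5p5 (T : TriangCat) (t : nat) (le : rel 'I_t)
    (Theta Q K : 'I_t -> Ob T)
    (alpha : forall i, THom (K i) (Q i)) (beta : forall i, THom (Q i) (Theta i))
    (gamma : forall i, THom (Theta i) (sh (K i))) :
  theta_proj_system le Theta Q K alpha beta gamma ->
  [/\ (* (a) *)
      (forall i j, le i j ->
         hom_zero (K j) (Theta i) /\ hom_zero (Theta j) (sh (Theta i))),
      (* (b) THom(beta_j, Theta i) is an isomorphism of abelian groups *)
      (forall i j, le i j ->
         {morph (fun f : THom (Theta j) (Theta i) => tcomp f (beta j)) : x y / x + y}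
         /\ bijective (fun f : THom (Theta j) (Theta i) => tcomp f (beta j)))
    & (* (c) *)
      ((forall i j, hom_zero (sh (sh (K j))) (Theta i)) ->
       forall i j, hom_zero (Theta i) (ush (Theta j)))].
Proof.
move=> [[Hrefl Hanti Htrans Htot] [Hnz [Hord [Hind [[Qs [[inj [pr [Hpi [Hpij Hsum]]]] HQs]] [Htri [HF HK]]]]]]].
have homQ : forall i W, hom_zero Qs W -> hom_zero (Q i) W.
  move=> i W H phi.
  by rewrite -(compm1 phi) -Hpi Defs.compA (H (tcomp phi (pr i))) comp0l.
have Kzero : forall i j, le i j -> hom_zero (K j) (Theta i).
  move=> i j Hij; have [n Hn] := HF j.
  apply: (@filt_zero T _ _ _ _ Hn) => X [k [Hjk ->]].
  apply: Hord; move/andP: Hjk => [Hjk1 Hjk2].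
  apply/andP; split; first exact: Htrans Hjk1.
  apply/negP => /eqP Eik; subst k.
  by move/negP: Hjk2; apply; apply/eqP; apply: Hanti; rewrite Hij Hjk1.
have kerb : forall i j, le i j -> forall g : THom (Theta j) (Theta i),
    tcomp g (beta j) = 0 -> g = 0.
  move=> i j Hij g Hg.
  case: (eqVneq i j) => [Eij|Nij].
    subst j; have [chi ->] := @exact_third T _ _ _ _ _ _ _ g (Htri i) Hg.
    by rewrite (HK i chi) comp0l.
  by apply: (Hord i j); rewrite /ltl Hij Nij.
split.
- move=> i j Hij; split; first exact: Kzero.
  move=> psi.
  have Hb : tcomp psi (beta j) = 0 by apply: homQ; exact: (HQs i).1.
  have [chi ->] := @exact_third T _ _ _ _ _ _ _ psi (Htri j) Hb.
  by rewrite (@shift_zero1 T _ _ (Kzero i j Hij) chi) comp0l.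
- move=> i j Hij; split.
    by move=> x y /=; rewrite compDl.
  have Hsurj : forall y : THom (Q j) (Theta i),
      exists x : THom (Theta j) (Theta i), tcomp x (beta j) == y.
    move=> y.
    have [chi ->] := @exact_mid T _ _ _ _ _ _ _ y (Htri j) (Kzero i j Hij _).
    by exists chi.
  have Hinj : forall x1 x2 : THom (Theta j) (Theta i),
      tcomp x1 (beta j) = tcomp x2 (beta j) -> x1 = x2.
    move=> x1 x2 E; apply/eqP; rewrite -subr_eq0; apply/eqP.
    by apply: (kerb i j Hij); rewrite compDl compNl E subrr.
  exists (fun y => xchoose (Hsurj y)).
    by move=> x; apply: Hinj; apply/eqP; exact: (xchooseP (Hsurj _)).
  by move=> y; apply/eqP; exact: (xchooseP (Hsurj y)).
- move=> Hc i j psi.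
  have Hb : tcomp psi (beta i) = 0 by apply: homQ; exact: (HQs j).2.
  have [chi ->] := @exact_third T _ _ _ _ _ _ _ psi (Htri i) Hb.
  by rewrite (@shift_zero2 T _ _ (Hc j i) chi) comp0l.
Qed.
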